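(* Let $m\ge1$. For $j=1,\ldots,m$ let $\rho_j,\bar\gamma_j\ge0$ with $\rho_j+\bar\gamma_j>0$, and let $\phi_{j,0}>0$ be constants. Let $(\eta_i)_{i\ge0}$ be integrable random variables with $\eta_{i+1}\ge\eta_i$ almost surely for all $i$, and $\eta_0\ge\underline\eta$ almost surely for some constant $\underline\eta>0$. Define recursively $$\phi_{j,i+1}:=\phi_{j,i}+2(\bar\gamma_j\eta_i+\rho_j)\qquad(j=1,\ldots,m;\ i\ge0).$$ Then: (a) If each $\eta_i$ is $\mathcal{O}_{i-1}$-measurable for a filtration $(\mathcal{O}_i)_{i\ge-1}$, then $\phi_{j,N}$ is $\mathcal{O}_{N-1}$-measurable and positive for every $N\ge1$. (b) For every $N\ge1$, $$\mathcal{E}[\phi_{j,N}]=\phi_{j,0}+2\rho_jN+2\bar\gamma_j\sum_{i=0}^{N-1}\mathcal{E}[\eta_i].$$ (c) There are constants $c_j>0$ such that $\mathcal{E}[\phi_{j,N}^{-1}]\le c_j/N$ for all $N\ge1$. (d) Suppose in addition that there are $p>0$ and $b>0$ such that $\eta_i\ge b\min_{k=1,\ldots,m}\phi_{k,i}^{\,p}$ almost surely for all $i\ge0$. Then there are constants $\tilde c_j>0$ such that $$\frac{1}{\mathcal{E}[\phi_{j,N}^{-1}]}\ \ge\ \bar\gamma_j\tilde c_jN^{p+1}\qquad(N\ge4).$$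
   Context: $\mathcal{E}$ denotes expectation on an underlying probability space. A filtration $(\mathcal{O}_i)_{i\ge-1}$ is an increasing sequence of $\sigma$-algebras. *)

(* Defs.v *)
From HB Require Import structures.
From mathcomp Require Import all_boot all_order all_algebra.
From mathcomp Require Import all_classical all_reals all_analysis.
Set Implicit Arguments. Unset Strict Implicit. Unset Printing Implicit Defensive.
Import Order.TTheory GRing.Theory Num.Theory.
Local Open Scope classical_set_scope.
Local Open Scope ring_scope.

Fixpoint phiseq {T : Type} {R : realType} (phi0 gam rho : R)
    (eta : nat -> T -> R) (i : nat) (x : T) : R :=
  match i with
  | 0%N => phi0
  | i'.+1 => phiseq phi0 gam rho eta i' x + 2 * (gam * eta i' x + rho)
  end.

Definition G_measurable {d} {T : measurableType d} {R : realType}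
    (G : set (set T)) (f : T -> R) : Prop :=
  forall B : set R, measurable B -> G (f @^-1` B).

(* A filtration (O_k)_{k >= -1}, encoded as F : nat -> set (set T) with
   F k = O_{k-1}: each F k is a sigma-algebra on T contained in the ambient
   one, and the family is increasing. *)
Definition is_filtration {d} {T : measurableType d} (F : nat -> set (set T)) : Prop :=
  (forall k, sigma_algebra setT (F k)) /\
  (forall k, F k `<=` measurable) /\
  (forall k, F k `<=` F k.+1).

(* Main.v *)
Require Import Defs.
From HB Require Import structures.
From mathcomp Require Import all_boot all_order all_algebra.
From mathcomp Require Import all_classical all_reals all_analysis.
From mathcomp Require Import measurable_realfun ring lra.
Import Order.TTheory GRing.Theory Num.Theory.
Local Open Scope classical_set_scope.
Local Open Scope ring_scope.


Lemma phiseqE {T : Type} {R : realType} (phi0 gam rho : R) (eta : nat -> T -> R) N x :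
  phiseq phi0 gam rho eta N x = phi0 + 2 * \sum_(i < N) (gam * eta i x + rho).
Proof.
elim: N => [|N IH]; first by rewrite /= big_ord0 mulr0 addr0.
rewrite /=.
by rewrite IH big_ord_recr /= [in RHS]mulrDr addrA.
Qed.

Lemma phiseq_meas {d} {T : measurableType d} {R : realType} (phi0 gam rho : R)
  (eta : nat -> T -> R) N :
  (forall i, (i < N)%N -> measurable_fun setT (eta i)) ->
  measurable_fun setT (phiseq phi0 gam rho eta N).
Proof.
elim: N => [|N IH] hm /=; first exact: measurable_cst.
apply: measurable_realfun.measurable_funD; first by apply: IH => i iN; apply: hm; apply: ltnW.
apply: measurable_realfun.measurable_funM; first exact: measurable_cst.
apply: measurable_realfun.measurable_funD; last exact: measurable_cst.
apply: measurable_realfun.measurable_funM; first exact: measurable_cst.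
exact: hm.
Qed.

Lemma phiseq_Lfun {d} {T : measurableType d} {R : realType} (P : probability T R)
  (phi0 gam rho : R) (eta : nat -> T -> R) N :
  (forall i, P.-integrable setT (EFin \o eta i)) ->
  phiseq phi0 gam rho eta N \in Lfun P 1.
Proof.
move=> hi; apply/Lfun1_integrable.
elim: N => [|N IH] /=; first exact: finite_measure_integrable_cst.
have -> : EFin \o phiseq phi0 gam rho eta N.+1 =
   (EFin \o phiseq phi0 gam rho eta N) \+
   ((fun x => ((2 * gam)%R)%:E * (EFin \o eta N) x)%E \+ (EFin \o cst (2 * rho)%R))%E.
  by apply/funext => x /=; rewrite -!EFinM -!EFinD mulrDr mulrA.
apply: integrableD => //; apply: integrableD => //.
  exact: integrableZl.
exact: finite_measure_integrable_cst.
Qed.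


Lemma phiseq_E {d} {T : measurableType d} {R : realType} (P : probability T R)
  (phi0 gam rho : R) (eta : nat -> T -> R) N :
  (forall i, P.-integrable setT (EFin \o eta i)) ->
  ('E_P[phiseq phi0 gam rho eta N] = (phi0 + 2 * rho * N%:R)%:E
                      + (2 * gam)%:E * \sum_(i < N) 'E_P[eta i])%E.
Proof.
move=> hi.
have hL i : eta i \in Lfun P 1 by apply/Lfun1_integrable.
have hE i : ('E_P[eta i] = (fine 'E_P[eta i])%:E)%E.
  by rewrite fineK// expectation_fin_num.
under eq_bigr do rewrite hE.
rewrite sumEFin -EFinM -EFinD.
elim: N => [|N IH].
  by rewrite big_ord0 mulr0 mulr0 !addr0 /= expectation_cst.
have -> : phiseq phi0 gam rho eta N.+1 =
   (phiseq phi0 gam rho eta N) \+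
   ((2 * gam) \o* eta N \+ cst (2 * rho)).
  by apply/funext => x /=; ring.
have hLc c : cst c \in Lfun P 1 by apply: (@Lfun_cst _ _ _ P c 1).
have hLs : (2 * gam) \o* eta N \in Lfun P 1 by apply: (@Lfun_scale _ _ _ P _ _ 1).
rewrite expectationD; [|exact: phiseq_Lfun|exact: rpredD].
rewrite expectationD // expectationZl // expectation_cst IH hE.
by rewrite big_ord_recr /= -EFinM -!EFinD -addn1 natrD; congr (_%:E); ring.
Qed.


Lemma inv_measurable (R : realType) : measurable_fun (setT : set R) GRing.inv.
Proof.
have -> : (setT : set R) = [set 0] `|` [set x | x != 0].
  by apply/seteqP; split => x //= _; case: (eqVneq x 0) => [->|h]; [left|right].
apply/measurable_funU => //.
  by apply: measurable_realfun.open_measurable; exact: open_neq.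
split; first exact: measurable_fun_set1.
apply: measurable_realfun.open_continuous_measurable_fun.
  exact: open_neq.
move=> x; rewrite inE /= => x0.
exact: inv_continuous.
Qed.

Lemma invE_bound {d} {T : measurableType d} {R : realType} (P : probability T R)
  (h : T -> R) (B : R) :
  measurable_fun setT h -> 0 < B -> {ae P, forall x, B <= h x} ->
  ('E_P[fun x => ((h x)^-1)%R] <= (B^-1)%:E)%E /\ (0 < 'E_P[fun x => ((h x)^-1)%R])%E.
Proof.
move=> mh B0 hB.
have mf : measurable_fun setT (fun x => (h x)^-1) :=
  measurableT_comp (inv_measurable R) mh.
have mfE : measurable_fun setT (fun x => ((h x)^-1)%:E : \bar R) by apply/measurable_EFinP.
have mg : measurable_fun setT (fun x => `|((h x)^-1)%:E|)%E :=
  measurableT_comp (@abse_measurable R setT) mfE.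
have E1 : ('E_P[fun x => ((h x)^-1)%R] = \int[P]_x `|((h x)^-1)%:E|)%E.
  rewrite unlock; apply: ae_eq_integral => //.
  apply: filterS hB => x hx _ /=.
  by rewrite ger0_norm // invr_ge0 (le_trans (ltW B0) hx).
rewrite E1; split.
  apply: (@le_trans _ _ (\int[P]_x (cst (B^-1)%:E) x)%E).
    apply: ae_ge0_le_integral => //.
    - by move=> x _ /=; rewrite lee_fin invr_ge0 ltW.
    apply: filterS hB => x hx _ /=.
    have hx0 : 0 < h x by apply: lt_le_trans hx.
    rewrite /= lee_fin ger0_norm ?invr_ge0 ?(ltW hx0) // lef_pV2 ?posrE //.
  by rewrite integral_cst //= probability_setT mule1.
rewrite lt_neqAle integral_ge0 // andbT; apply/negP => /eqP/esym.
move/(ae_eq_integral_abs P measurableT mfE) => h0.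
have : {ae P, forall x : T, False}.
  apply: filterS2 hB h0 => x hx /(_ I) /= /eqP.
  by rewrite eqe invr_eq0 gt_eqF // (lt_le_trans B0 hx).
case=> N [mN PN0 sub].
have : P setT = 0%E.
  apply/eqP; rewrite -measure_le0 -PN0 le_measure ?inE //.
  by move=> x _; apply: sub => /=; apply.
by rewrite probability_setT => /eqP; rewrite onee_eq0.
Qed.


Lemma sum_pow_lb (R : realType) (p : R) (N : nat) : 0 <= p ->
  N%:R * (N%:R / 2) `^ p <= 2 * \sum_(i < N) (i.+1)%:R `^ p.
Proof.
move=> p0.
set S := \sum_(i < N) _.
rewrite (_ : 2 * S = S + S); last by ring.
rewrite {2}/S (reindex_inj rev_ord_inj) /= /S -big_split /=.
rewrite (_ : N%:R * _ = \sum_(i < N) (N%:R / 2) `^ p); last first.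
  by rewrite sumr_const card_ord mulr_natl.
apply: ler_sum => i _.
have iN : (i < N)%N := ltn_ord i.
have eq1 : ((N - i.+1).+1)%:R = N%:R - i%:R :> R.
  by rewrite subnSK // natrB // ltnW.
rewrite eq1.
have h2 : 0 <= N%:R / 2 :> R by rewrite divr_ge0.
have [hi|hi] := lerP (N%:R / 2 : R) (i.+1)%:R.
  rewrite -[X in X <= _]addr0 lerD ?powR_ge0 //.
  by apply: ge0_ler_powR => //; rewrite nnegrE.
rewrite -[X in X <= _]add0r lerD ?powR_ge0 //.
apply: ge0_ler_powR => //; rewrite ?nnegrE //.
  by rewrite subr_ge0 ler_nat ltnW.
move: hi; rewrite -natr1 => hi.
have : (i%:R : R) < N%:R by rewrite ltr_nat.
lra.
Qed.


Lemma G_meas_phi {d} {T : measurableType d} {R : realType} (F : nat -> set (set T))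
  (phi0 gam rho : R) (eta : nat -> T -> R) :
  is_filtration F -> (forall i, G_measurable (F i) (eta i)) ->
  forall N, G_measurable (F N) (phiseq phi0 gam rho eta N).
Proof.
move=> [hs [_ hinc]] hm N.
have mono i k : (i <= k)%N -> F i `<=` F k.
  elim: k => [|k IH]; first by rewrite leqn0 => /eqP ->.
  rewrite leq_eqVlt => /orP[/eqP ->//|]; rewrite ltnS => /IH h.
  exact: subset_trans h (hinc k).
have key (f : T -> R) : G_measurable (F N) f ->
    measurable_fun (setT : set (g_sigma_algebraType (F N))) f.
  move=> hf _ B mB; rewrite setTI.
  by apply: sub_sigma_algebra; exact: hf.
have key2 (f : T -> R) : measurable_fun (setT : set (g_sigma_algebraType (F N))) f ->
    G_measurable (F N) f.
  move=> hf B mB; have := hf measurableT B mB; rewrite setTI.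
  by rewrite /measurable /= (sigma_algebra_id (hs N)).
apply: key2.
apply: (@phiseq_meas _ (g_sigma_algebraType (F N))) => i iN.
apply: key => B mB; apply: (mono i N); [exact: ltnW | exact: hm].
Qed.


Theorem mainTheorem4 (R : realType) (d : measure_display) (T : measurableType d)
  (P : probability T R) (n : nat) (rho gam phi0 : 'I_n.+1 -> R)
  (eta : nat -> T -> R) (etal : R) :
  (forall j, 0 <= rho j) -> (forall j, 0 <= gam j) -> (forall j, 0 < rho j + gam j) ->
  (forall j, 0 < phi0 j) ->
  (forall i, P.-integrable setT (EFin \o eta i)) ->
  (forall i, {ae P, forall x, eta i x <= eta i.+1 x}) ->
  0 < etal -> {ae P, forall x, etal <= eta 0%N x} ->
  let phi j := phiseq (phi0 j) (gam j) (rho j) eta in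
  (* (a) *)
  (forall F : nat -> set (set T), is_filtration F ->
     (forall i, G_measurable (F i) (eta i)) ->
     forall j N, (1 <= N)%N ->
       G_measurable (F N) (phi j N) /\ {ae P, forall x, 0 < phi j N x}) /\
  (* (b) *)
  (forall j N, (1 <= N)%N ->
     ('E_P[phi j N] = (phi0 j + 2 * rho j * N%:R)%:E
                      + (2 * gam j)%:E * \sum_(i < N) 'E_P[eta i])%E) /\
  (* (c) *)
  (exists c : 'I_n.+1 -> R, (forall j, 0 < c j) /\
     forall j N, (1 <= N)%N ->
       ('E_P[fun x => ((phi j N x)^-1)%R] <= (c j / N%:R)%:E)%E) /\
  (* (d) *)
  (forall p b : R, 0 < p -> 0 < b ->
     (forall i, {ae P, forall x,
        b * \big[Order.min/(phi ord0 i x) `^ p]_(k < n.+1) (phi k i x) `^ p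
          <= eta i x}) ->
     exists ct : 'I_n.+1 -> R, (forall j, 0 < ct j) /\
       forall j N, (4 <= N)%N ->
         gam j * ct j * N%:R `^ (p + 1) <= (fine 'E_P[fun x => ((phi j N x)^-1)%R])^-1).
Proof.
Proof.
move=> hrho hgam hrg hphi0 hint hmono hetal0 hetal phi.
have meta i : measurable_fun setT (eta i).
  by apply/measurable_EFinP; exact: (measurable_int P (hint i)).
have mphi j N : measurable_fun setT (phi j N).
  by apply: phiseq_meas => i _.
have hae : {ae P, forall x, forall i, etal <= eta i x}.
  apply: filterS2 (ae_foralln hmono) hetal => x hx h0.
  by elim=> [//|i IH]; apply: le_trans IH (hx i).
have hd j : 0 < gam j * etal + rho j.
  have := hrg j; have := hgam j; have := hrho j.
  case: (eqVneq (gam j) 0) => [->|g0] r0 g0' rg.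
    by rewrite mul0r add0r -[rho j]addr0.
  have g1 : 0 < gam j by rewrite lt_neqAle eq_sym g0.
  have := mulr_gt0 g1 hetal0; lra.
have lb j N x : (forall i, etal <= eta i x) ->
    phi0 j + 2 * (gam j * etal + rho j) * N%:R <= phi j N x.
  move=> hx; rewrite /phi phiseqE lerD2l -mulrA ler_wpM2l //.
  rewrite (_ : (gam j * etal + rho j) * N%:R = \sum_(i < N) (gam j * etal + rho j)); last first.
    by rewrite sumr_const card_ord mulr_natr.
  apply: ler_sum => i _; rewrite lerD2r ler_wpM2l //.
have EB j N : (1 <= N)%N ->
    ('E_P[fun x => ((phi j N x)^-1)%R] <= ((2 * (gam j * etal + rho j) * N%:R)^-1)%:E)%E /\ (0 < 'E_P[fun x => ((phi j N x)^-1)%R])%E.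
  move=> hN; have := (@invE_bound _ _ _ P (phi j N) (2 * (gam j * etal + rho j) * N%:R) (mphi j N)); apply.
    by rewrite mulr_gt0 ?mulr_gt0 // ltr0n.
  apply: filterS hae => x hx; apply: le_trans (lb _ _ _ hx).
  by rewrite lerDr ltW.
split.
  move=> F hF hFm j N hN; split; first exact: G_meas_phi.
  apply: filterS hae => x hx; apply: lt_le_trans (lb _ _ _ hx).
  by rewrite ltr_pwDl // mulr_ge0 // mulr_ge0 // ltW.
split.
  by move=> j N _; exact: phiseq_E.
split.
  exists (fun j => (2 * (gam j * etal + rho j))^-1); split.
    by move=> j; rewrite invr_gt0 mulr_gt0.
  by move=> j N hN; have [+ _] := EB j N hN; rewrite invfM.
move=> p b hp hb hdd.
set a := \big[Order.min/1]_(k < n.+1) Order.min (phi0 k) (2 * (gam k * etal + rho k)).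
have a0 : 0 < a.
  by apply: lt_bigmin => // k _; rewrite lt_min hphi0 /= mulr_gt0.
have ha k : a <= phi0 k /\ a <= 2 * (gam k * etal + rho k).
  have : a <= Order.min (phi0 k) (2 * (gam k * etal + rho k)) by exact: bigmin_le.
  by rewrite le_min => /andP[].
have lbk k i x : (forall i, etal <= eta i x) -> a * (i.+1)%:R <= phi k i x.
  move=> hx; apply: le_trans (lb k i x hx); have [h1 h2] := ha k.
  rewrite -addn1 natrD mulrDr mulr1 addrC; apply: lerD => //.
  by apply: ler_wpM2r.
have hae2 : {ae P, forall x, (forall i, etal <= eta i x) /\
   (forall i, b * \big[Order.min/(phi ord0 i x) `^ p]_(k < n.+1) (phi k i x) `^ p <= eta i x)}.
  by apply: filterS2 hae (ae_foralln hdd) => x h1 h2; split.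
have low x i : (forall i, etal <= eta i x) ->
    (forall i, b * \big[Order.min/(phi ord0 i x) `^ p]_(k < n.+1) (phi k i x) `^ p <= eta i x) ->
    b * (a * (i.+1)%:R) `^ p <= eta i x.
  move=> h1 h2; apply: le_trans (h2 i); apply: ler_wpM2l; first exact: ltW.
  have pw k : (a * (i.+1)%:R) `^ p <= (phi k i x) `^ p.
    have h0 : 0 <= a * (i.+1)%:R by rewrite mulr_ge0 // ltW.
    apply: ge0_ler_powR; [exact: ltW | by rewrite nnegrE | | exact: lbk].
    by rewrite nnegrE; apply: le_trans (lbk k i x h1).
  by apply: le_bigmin => // k _.
exists (fun j => b * a `^ p * (2^-1) `^ p); split.
  by move=> j; rewrite mulr_gt0 ?mulr_gt0 ?powR_gt0 ?invr_gt0.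
move=> j N hN.
have hN1 : (1 <= N)%N by apply: leq_trans hN.
have [EBle EBgt] := EB j N hN1.
set E := ('E_P[fun x => ((phi j N x)^-1)%R])%E in EBle EBgt *.
have Efin : E \is a fin_num.
  by rewrite ge0_fin_numE ?(ltW EBgt) // (le_lt_trans EBle) // ltry.
have e0 : 0 < fine E by rewrite -lte_fin fineK.
case: (eqVneq (gam j) 0) => [->|g0].
  by rewrite !mul0r invr_ge0 ltW.
have g1 : 0 < gam j by rewrite lt_neqAle eq_sym g0 hgam.
set B := gam j * (b * a `^ p * 2^-1 `^ p) * N%:R `^ (p + 1).
have B0 : 0 < B by rewrite /B !mulr_gt0 ?powR_gt0 ?invr_gt0 ?ltr0n //; apply: leq_trans hN.
have hB : {ae P, forall x, B <= phi j N x}.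
  apply: filterS hae2 => x [h1 h2].
  have S1 : 2 * gam j * \sum_(i < N) b * (a * (i.+1)%:R) `^ p <= phi j N x.
    rewrite /phi phiseqE; apply: le_trans (_ : _ <= 2 * \sum_(i < N) (gam j * eta i x + rho j)) _; last first.
      have := hphi0 j; lra.
    rewrite -mulrA ler_wpM2l // mulr_sumr; apply: ler_sum => i _.
    apply: le_trans (_ : _ <= gam j * eta i x) _; last by rewrite lerDl.
    by rewrite ler_wpM2l // ?(ltW g1) // low.
  apply: le_trans S1.
  have eqS : \sum_(i < N) b * (a * (i.+1)%:R) `^ p =
      b * a `^ p * \sum_(i < N) (i.+1)%:R `^ p.
    rewrite mulr_sumr; apply: eq_bigr => i _.
    by rewrite powRM ?mulrA // ltW.
  have eqN : N%:R `^ (p + 1) * 2^-1 `^ p = N%:R * (N%:R / 2) `^ p :> R.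
    rewrite powRD; last by rewrite implybE gt_eqF ?orbT // ltr_wpDl // ltW.
    rewrite powRr1 // powRM // ?invr_ge0 //; ring.
  rewrite eqS /B (_ : gam j * (b * a `^ p * 2^-1 `^ p) * N%:R `^ (p + 1) =
     (gam j * b * a `^ p) * (N%:R `^ (p + 1) * 2^-1 `^ p)); last by ring.
  rewrite eqN (_ : 2 * gam j * (b * a `^ p * \sum_(i < N) (i.+1)%:R `^ p) =
     (gam j * b * a `^ p) * (2 * \sum_(i < N) (i.+1)%:R `^ p)); last by ring.
  rewrite ler_wpM2l ?sum_pow_lb ?ltW //.
  by rewrite !mulr_gt0 ?powR_gt0.
have := (@invE_bound _ _ _ P (phi j N) B (mphi j N) B0 hB) => -[+ _].
rewrite -/E -(fineK Efin) lee_fin => eB.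
by rewrite /= -[X in X <= _](invrK B) lef_pV2 ?posrE ?invr_gt0.
Qed.
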